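(* The intersection graph of any Sperner family is isomorphic to an induced subgraph of the difference graph $\mathcal{D}(G)$ for some cyclic group $G$ of squarefree order.
   Context: A Sperner family is a family $\mathcal{F}$ of subsets of a finite set $X$ such that for any two distinct $F_1,F_2\in\mathcal{F}$ we have $F_1\not\subseteq F_2$. The intersection graph of $\mathcal{F}$ has vertex set $\mathcal{F}$, two distinct members adjacent iff they intersect. For a finite group $G$ with identity $e$: the intersection power graph $\mathcal{G}_I(G)$ has vertex set $G$, two distinct non-identity vertices $x,y$ being adjacent iff $\langle x\rangle\cap\langle y\rangle\neq\{e\}$, and $e$ adjacent to every other vertex; the power graph $\mathcal{P}(G)$ has vertex set $G$, two distinct vertices adjacent iff one is a power of the other; the difference graph $\mathcal{D}(G)$ has edge set $E(\mathcal{G}_I(G))\setminus E(\mathcal{P}(G))$ on vertex set $G$, with all isolated vertices removed. *)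

(* Defs.v *)
From mathcomp Require Import all_boot all_fingroup all_solvable.
Set Implicit Arguments. Unset Strict Implicit. Unset Printing Implicit Defensive.
Local Open Scope group_scope.

Definition squarefree (n : nat) : Prop :=
  0 < n /\ forall p, prime p -> ~~ (p ^ 2 %| n)%N.

Definition sperner (T : finType) (F : {set {set T}}) : Prop :=
  forall A B, A \in F -> B \in F -> A != B -> ~~ (A \subset B).

Definition inter_adj (T : finType) (A B : {set T}) : bool :=
  (A != B) && (A :&: B != set0).

Definition ipg_adj (gT : finGroupType) (x y : gT) : bool :=
  (x != y) && [|| x == 1, y == 1 | <[x]> :&: <[y]> != 1].

Definition pg_adj (gT : finGroupType) (x y : gT) : bool :=
  (x != y) && ((x \in <[y]>) || (y \in <[x]>)).

Definition diff_adj (gT : finGroupType) (x y : gT) : bool :=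
  ipg_adj x y && ~~ pg_adj x y.

(* vertex set of D(G): non-isolated vertices of G under diff_adj *)
Definition diff_vertex (gT : finGroupType) (G : {set gT}) (x : gT) : bool :=
  (x \in G) && [exists y in G, diff_adj x y].

(* Main.v *)
Require Import Defs.
From mathcomp Require Import all_boot all_fingroup all_solvable zmodp.
Set Implicit Arguments. Unset Strict Implicit. Unset Printing Implicit Defensive.
Local Open Scope group_scope.

Section Cyc.
Variables (gT : finGroupType) (g : gT).

Lemma cyc_mem (x y : gT) : x \in <[g]> -> y \in <[g]> ->
  (x \in <[y]>) = (#[x] %| #[y])%N.
Proof.
move=> xg yg; rewrite -cycle_subG -(cardSg_cyclic (cycle_cyclic g)) ?cycle_subG //.
Qed.

Lemma order_div (x : gT) d : (d %| #[x])%N -> #[x ^+ (#[x] %/ d)] = d.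
Proof.
move=> dx; rewrite orderXdiv ?dvdn_div // divnA // mulKn //.
Qed.

Lemma cyc_meet (x y : gT) : x \in <[g]> -> y \in <[g]> ->
  (<[x]> :&: <[y]> != 1) = (1 < gcdn #[x] #[y])%N.
Proof.
move=> xg yg; apply/idP/idP.
  move=> H1.
  have c1 : (1 < #|<[x]> :&: <[y]>|)%N.
    rewrite ltn_neqAle cardG_gt0 andbT eq_sym.
    by rewrite -trivg_card1.
  apply: (leq_trans c1); apply: dvdn_leq; first by rewrite gcdn_gt0 order_gt0.
  by rewrite dvdn_gcd /order !cardSg // ?subsetIl ?subsetIr.
move=> gt1; set d := gcdn #[x] #[y].
have dx : (d %| #[x])%N by apply: dvdn_gcdl.
have dy : (d %| #[y])%N by apply: dvdn_gcdr.
set z := x ^+ (#[x] %/ d).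
have oz : #[z] = d by apply: order_div.
apply/trivgPn; exists z; last by rewrite -order_eq1 oz neq_ltn gt1 orbT.
have zg : z \in <[g]> by rewrite /z groupX.
by rewrite inE mem_cycle /= (cyc_mem zg yg) oz.
Qed.
End Cyc.

Definition nextp n := s2val (prime_above n).
Lemma nextp_prime n : prime (nextp n).
Proof. rewrite /nextp; by case: prime_above. Qed.
Lemma nextp_gt n : (n < nextp n)%N.
Proof. rewrite /nextp; by case: prime_above. Qed.
Fixpoint pr k : nat := match k with 0 => 2 | k'.+1 => nextp (pr k') end.
Lemma pr_prime k : prime (pr k).
Proof. case: k => [|k]; [by [] | exact: nextp_prime]. Qed.
Lemma pr_lt k : (pr k < pr k.+1)%N.
Proof. exact: nextp_gt. Qed.

Lemma pr_mono : forall i j, (i < j)%N -> (pr i < pr j)%N.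
Proof.
move=> i j; elim: j => [//|j IH]; rewrite ltnS leq_eqVlt => /orP [/eqP -> | /IH h].
  exact: pr_lt.
exact: ltn_trans h (pr_lt j).
Qed.
Lemma pr_inj : injective pr.
Proof.
move=> i j e; case: (ltngtP i j) => // h.
  by have := pr_mono h; rewrite e ltnn.
by have := pr_mono h; rewrite e ltnn.
Qed.

Section Prod.
Variable I : finType.
Definition P (i : I) := pr (enum_rank i).
Lemma P_prime i : prime (P i). Proof. exact: pr_prime. Qed.
Lemma P_inj : injective P.
Proof. by move=> i j /pr_inj /ord_inj /enum_rank_inj. Qed.

Lemma P_dvd i j : (P i %| P j)%N -> i = j.
Proof. by rewrite dvdn_prime2 ?P_prime // => /eqP /P_inj. Qed.

Lemma euclid_prod (Q : pred I) p : prime p ->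
  (p %| \prod_(i | Q i) P i)%N -> exists2 i, Q i & (p %| P i)%N.
Proof.
move=> pp; apply: (big_ind (fun n => (p %| n)%N -> exists2 i, Q i & (p %| P i)%N)).
- by rewrite dvdn1 => /eqP p1; move: pp; rewrite p1.
- by move=> a b Ha Hb; rewrite Euclid_dvdM // => /orP [/Ha | /Hb].
- by move=> i Qi pd; exists i.
Qed.

Definition m (S : {set I}) := (\prod_(i in S) P i)%N.

Lemma m_gt0 S : (0 < m S)%N.
Proof. by apply: prodn_gt0 => i; apply: prime_gt0; apply: P_prime. Qed.

Lemma m_dvd S1 S2 : (m S1 %| m S2)%N = (S1 \subset S2).
Proof.
apply/idP/idP.
  move=> d; apply/subsetP => i iS1.
  have : (P i %| m S2)%N.
    apply: dvdn_trans d; rewrite /m (bigD1 i) //=; exact: dvdn_mulr.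
  case/euclid_prod; first exact: P_prime.
  by move=> j jS2 /P_dvd ->.
move=> sub; rewrite /m [X in (_ %| X)%N](big_setID S1) /=; have -> : S2 :&: S1 = S1 by apply/setIidPr.
exact: dvdn_mulr.
Qed.

Lemma m_gcd S1 S2 : (1 < gcdn (m S1) (m S2))%N = (S1 :&: S2 != set0).
Proof.
apply/idP/idP.
  move=> gt1; have pp := pdiv_prime gt1; have pd := pdiv_dvd (gcdn (m S1) (m S2)).
  have [] := euclid_prod pp (dvdn_trans pd (dvdn_gcdl _ _)).
  have [] := euclid_prod pp (dvdn_trans pd (dvdn_gcdr _ _)).
  move=> j jS2 pj i iS1 pi.
  have ep : pdiv (gcdn (m S1) (m S2)) = P i.
    by apply/eqP; rewrite -dvdn_prime2 ?P_prime.
  rewrite ep in pj; have := P_dvd pj => eij.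
  by apply/set0Pn; exists i; rewrite inE iS1 eij jS2.
case/set0Pn => i; rewrite inE => /andP [i1 i2].
have pg : (P i %| gcdn (m S1) (m S2))%N.
  by rewrite dvdn_gcd /m (bigD1 i i1) (bigD1 i i2) /= !dvdn_mulr.
apply: (leq_trans (prime_gt1 (P_prime i))); apply: dvdn_leq => //.
by rewrite gcdn_gt0 m_gt0.
Qed.

Lemma m_sqf : squarefree (m setT).
Proof.
split; first exact: m_gt0.
move=> p pp; apply/negP => d.
have pd : (p %| m setT)%N by apply: dvdn_trans d; rewrite expnS dvdn_mulr.
case: (euclid_prod pp pd) => i _ pi.
have ep : p = P i by apply/eqP; rewrite -dvdn_prime2 ?P_prime.
move: d; rewrite ep /m (bigD1 i) //= expnS expn1 dvdn_pmul2l ?prime_gt0 ?P_prime //.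
case/euclid_prod; first exact: P_prime.
by move=> j /andP [_ /eqP ne] /P_dvd e; apply: ne.
Qed.
End Prod.

Lemma m_gt1 (I : finType) (S : {set I}) : S != set0 -> (1 < m S)%N.
Proof. by move=> ne; rewrite -[m S]gcdnn m_gcd setIid. Qed.

Section Elem.
Variables (I : finType) (gT : finGroupType) (g : gT).
Hypothesis og : #[g] = m [set: I].

Definition elem (S : {set I}) := g ^+ (#[g] %/ m S).

Lemma elem_in S : elem S \in <[g]>.
Proof. exact: mem_cycle. Qed.

Lemma order_elem S : #[elem S] = m S.
Proof. by apply: order_div; rewrite og m_dvd subsetT. Qed.

Lemma elem_inj S1 S2 : elem S1 = elem S2 -> S1 = S2.
Proof.
move=> e; have : m S1 = m S2 by rewrite -!order_elem e.
move=> em; apply/eqP; by rewrite eqEsubset -!m_dvd em dvdnn.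
Qed.

Lemma elem_eq S1 S2 : (elem S1 == elem S2) = (S1 == S2).
Proof. by apply/eqP/eqP => [/elem_inj | ->]. Qed.

Lemma elem_neq1 S : S != set0 -> (elem S == 1) = false.
Proof.
by move=> ne; rewrite -order_eq1 order_elem; apply/negbTE; rewrite neq_ltn m_gt1 ?orbT.
Qed.

Lemma diff_elem S1 S2 : S1 != set0 -> S2 != set0 ->
  diff_adj (elem S1) (elem S2) =
  [&& S1 :&: S2 != set0, ~~ (S1 \subset S2) & ~~ (S2 \subset S1)].
Proof.
move=> n1 n2; rewrite /diff_adj /ipg_adj /pg_adj elem_eq !elem_neq1 //=.
rewrite (cyc_meet (elem_in S1) (elem_in S2)) !order_elem m_gcd.
rewrite (cyc_mem (elem_in S1) (elem_in S2)) (cyc_mem (elem_in S2) (elem_in S1)).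
rewrite !order_elem !m_dvd.
case: (eqVneq S1 S2) => [-> | ne] /=; first by rewrite subxx andbF.
by case: (S1 :&: S2 != set0); case: (S1 \subset S2); case: (S2 \subset S1).
Qed.

Lemma diff_vert S1 S2 : S1 :&: S2 != set0 -> ~~ (S1 \subset S2) -> ~~ (S2 \subset S1) ->
  diff_vertex <[g]> (elem S1).
Proof.
move=> h1 h2 h3; rewrite /diff_vertex elem_in /=.
apply/existsP; exists (elem S2); rewrite elem_in diff_elem ?h1 ?h2 ?h3 //.
  by apply: contraNneq h1 => ->; rewrite set0I.
by apply: contraNneq h1 => ->; rewrite setI0.
Qed.
End Elem.

Section Main.
Variable T : finType.
Definition I := (option T * 'I_3)%type.
Definition o1 : 'I_3 := @Ordinal 3 1 isT.
Definition o2 : 'I_3 := @Ordinal 3 2 isT.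

Definition SA (A : {set T}) : {set I} :=
  [set i : I | (if i.1 is Some t then t \in A else false) && (i.2 != o2)].

Lemma SA_sub A B : (SA A \subset SA B) = (A \subset B).
Proof.
apply/subsetP/subsetP => h.
  move=> t tA; have : (Some t, ord0) \in SA A by rewrite inE /= tA.
  by move/h; rewrite inE /= andbT.
by case=> [[t|] k]; rewrite !inE //= => /andP [/h -> ->].
Qed.

Lemma SA_meet A B : (SA A :&: SA B != set0) = (A :&: B != set0).
Proof.
apply/set0Pn/set0Pn => [[[[t|] k]]|[t]].
- rewrite !inE /= => /andP [/andP [tA _] /andP [tB _]]; exists t.
  by rewrite inE tA tB.
- by rewrite !inE.
by rewrite inE => /andP [tA tB]; exists (Some t, ord0); rewrite !inE /= tA tB.
Qed.

Definition W (a : T) : {set I} := [set (Some a, ord0); (None, ord0)].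

Lemma W_prop (A : {set T}) a : a \in A ->
  [/\ SA A :&: W a != set0, ~~ (SA A \subset W a) & ~~ (W a \subset SA A)].
Proof.
move=> aA; split.
- by apply/set0Pn; exists (Some a, ord0); rewrite !inE /= aA eqxx.
- apply/subsetPn; exists (Some a, o1); rewrite !inE /= ?aA //. rewrite !xpair_eqE /=. by rewrite -val_eqE andbF.
- by apply/subsetPn; exists (None, ord0); rewrite !inE /= ?eqxx ?orbT.
Qed.

Definition X0 : {set I} := [set (None, ord0); (None, o1)].
Definition Y0 : {set I} := [set (None, o1); (None, o2)].

Lemma XY_prop : [/\ X0 :&: Y0 != set0, ~~ (X0 \subset Y0) & ~~ (Y0 \subset X0)].
Proof.
split.
- by apply/set0Pn; exists (None, o1); rewrite !inE eqxx ?orbT.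
- by apply/subsetPn; exists (None, ord0); rewrite !inE !xpair_eqE /=.
- by apply/subsetPn; exists (None, o2); rewrite !inE !xpair_eqE /=.
Qed.
End Main.


Lemma cyc_exists n : (0 < n)%N -> exists (gT : finGroupType) (g : gT), #[g] = n.
Proof.
move=> n0; exists (fintype_ordinal__canonical__fingroup_FinGroup n.-1), Zp1.
by rewrite order_Zp1 prednK.
Qed.

Theorem proposition3p10 (T : finType) (F : {set {set T}}) :
  sperner F ->
  exists (gT : finGroupType) (G : {group gT}),
    [/\ cyclic G, squarefree #|G| &
      exists f : {set T} -> gT,
        [/\ {in F &, injective f},
            (forall A, A \in F -> diff_vertex G (f A)) &
            {in F &, forall A B, inter_adj A B = diff_adj (f A) (f B)}]].
Proof.
move=> sp.
have [gT [g og]] := cyc_exists (m_gt0 [set: I T]).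
exists gT, <[g]>%G; split.
- exact: cycle_cyclic.
- have -> : #|<[g]>%G| = m [set: I T] by exact: og.
  exact: m_sqf.
case: (boolP (set0 \in F)) => [F0 | F0].
  have allF : forall A, A \in F -> A = set0.
    move=> A AF; apply/eqP; apply: contraT => ne.
    by have := sp _ _ F0 AF; rewrite eq_sym sub0set => /(_ ne).
  exists (fun _ => elem g (X0 T)); split.
  - by move=> A B AF BF _; rewrite (allF A AF) (allF B BF).
  - by move=> A _; case: (XY_prop T) => h1 h2 h3; apply: (diff_vert og h1 h2 h3).
  - move=> A B AF BF; rewrite (allF A AF) (allF B BF) /inter_adj /diff_adj /ipg_adj.
    by rewrite !eqxx.
have nz : forall A, A \in F -> A != set0.
  by move=> A AF; apply: contraNneq F0 => <-.
have SAnz : forall A, A \in F -> SA A != set0.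
  move=> A AF; case/set0Pn: (nz A AF) => a aA.
  by case: (W_prop aA) => h _ _; apply: contraNneq h => ->; rewrite set0I.
exists (fun A => elem g (SA A)); split.
- move=> A B AF BF /(elem_inj og) e; apply/eqP.
  by rewrite eqEsubset -(SA_sub A B) -(SA_sub B A) e subxx.
- move=> A AF; case/set0Pn: (nz A AF) => a aA.
  by case: (W_prop aA) => h1 h2 h3; apply: (diff_vert og h1 h2 h3).
- move=> A B AF BF; rewrite (diff_elem og (SAnz A AF) (SAnz B BF)) SA_meet !SA_sub.
  rewrite /inter_adj; case: (eqVneq A B) => [-> | ne] /=; first by rewrite subxx andbF.
  by rewrite (negbTE (sp _ _ AF BF ne)) (negbTE (sp _ _ BF AF _)) ?andbT // eq_sym.
Qed.
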